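(* The sequential specification $\mathsf{Mutex}$, defined by the ordered rules $R_0, R_{Lock}, R_{LU}$, is step-by-step linearizable: for every differentiated history $h$, every data value $x$, and every $i\in\{1,2,3\}$ with $(R_1,R_2,R_3)=(R_0,R_{Lock},R_{LU})$, if $h\sqsubseteq u$ for some $u\in M_x(R_i)$ and $h\setminus x\sqsubseteq[\![R_1,\dots,R_i]\!]$, then $h\sqsubseteq[\![R_1,\dots,R_i]\!]$.
   Context: Data values are natural numbers. Operations (resp. method events) are pairs of a method in $\{Lock, Unlock\}$ and a data value (a ghost parameter relating an $Unlock$ to its $Lock$). A history $h$ is a finite set of operations with a strict partial order $<_{hb}$ (happens-before) that is an interval order. A sequential execution is a finite sequence of method events. $h$ is differentiated if each data value is carried by at most one $Lock$ operation. $h\sqsubseteq u$ means there is a bijection between operations of $h$ and positions of $u$ preserving method and data value such that $o_1<_{hb}o_2$ implies the image of $o_1$ precedes that of $o_2$; $h\sqsubseteq S$ means $h\sqsubseteq u$ for some $u\in S$. $h\setminus x$ removes all operations with data value $x$. Rules: $R_0$: $\epsilon\in\mathsf{Mutex}$; $R_{Lock}$: $Lock(x)\in\mathsf{Mutex}$; $R_{LU}$: $u\in\mathsf{Mutex}\Rightarrow Lock(x)\cdot Unlock(x)\cdot u\in\mathsf{Mutex}$ ($x$ not in $u$). $[\![R_1,\dots,R_i]\!]$ is the smallest set of sequences closed under the listed rules. Matching sets with witness $x$: $M_x(R_0)=\{\epsilon\}$, $M_x(R_{Lock})=\{Lock(x)\}$, $M_x(R_{LU})$ = sequences $Lock(x)\cdot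 Unlock(x)\cdot u$ with $x$ not occurring in $u$. *)

(* Defs.v *)
From Stdlib Require Import List Arith.
Import ListNotations.

Inductive method : Set := Lock | Unlock.

Definition event : Set := (method * nat)%type.

(* A history: a finite set of operation identifiers [hops] (a duplicate-free
   list of nats), a labelling of each identifier by a method event, and the
   happens-before relation [hb] (only its restriction to [hops] matters). *)
Record history : Type := mkHistory {
  hops : list nat;
  hlab : nat -> event;
  hb : nat -> nat -> Prop
}.

(* Well-formedness: hb is a strict partial order on hops which is an
   interval order. *)
Definition is_history (h : history) : Prop :=
  NoDup (hops h) /\
  (forall o, In o (hops h) -> ~ hb h o o) /\
  (forall o1 o2 o3, In o1 (hops h) -> In o2 (hops h) -> In o3 (hops h) ->
     hb h o1 o2 -> hb h o2 o3 -> hb h o1 o3) /\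
  (forall a b c d, In a (hops h) -> In b (hops h) -> In c (hops h) ->
     In d (hops h) -> hb h a b -> hb h c d -> hb h a d \/ hb h c b).

Definition differentiated (h : history) : Prop :=
  forall o1 o2 v, In o1 (hops h) -> In o2 (hops h) ->
    hlab h o1 = (Lock, v) -> hlab h o2 = (Lock, v) -> o1 = o2.

Definition hremove (h : history) (x : nat) : history :=
  mkHistory (filter (fun o => negb (Nat.eqb (snd (hlab h o)) x)) (hops h))
            (hlab h) (hb h).

Definition hle (h : history) (u : list event) : Prop :=
  exists f : nat -> nat,
    length (hops h) = length u /\
    (forall o, In o (hops h) -> f o < length u /\ nth (f o) u (Lock, 0) = hlab h o) /\
    (forall o1 o2, In o1 (hops h) -> In o2 (hops h) -> f o1 = f o2 -> o1 = o2) /\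
    (forall o1 o2, In o1 (hops h) -> In o2 (hops h) -> hb h o1 o2 -> f o1 < f o2).

Definition hle_set (h : history) (S : list event -> Prop) : Prop :=
  exists u, S u /\ hle h u.

Definition not_occurs (x : nat) (u : list event) : Prop :=
  forall e, In e u -> snd e <> x.

(* [[R_1, ..., R_i]] with (R_1,R_2,R_3) = (R_0, R_Lock, R_LU):
   the smallest set closed under the first i rules. *)
Inductive mutex_upto (i : nat) : list event -> Prop :=
| rule_R0 : 1 <= i -> mutex_upto i []
| rule_RLock : forall x, 2 <= i -> mutex_upto i [(Lock, x)]
| rule_RLU : forall x u, 3 <= i -> mutex_upto i u -> not_occurs x u ->
    mutex_upto i ((Lock, x) :: (Unlock, x) :: u).

Definition matching (i : nat) (x : nat) (u : list event) : Prop :=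
  match i with
  | 1 => u = []
  | 2 => u = [(Lock, x)]
  | 3 => exists u', u = (Lock, x) :: (Unlock, x) :: u' /\ not_occurs x u'
  | _ => False
  end.

(* Main.v *)
Require Import Defs.
From Stdlib Require Import List Arith Lia.
Import ListNotations.

Lemma inj_len (l S : list nat) (f : nat -> nat) :
  NoDup l -> (forall a b, In a l -> In b l -> f a = f b -> a = b) ->
  (forall a, In a l -> In (f a) S) -> length l <= length S.
Proof.
  intros Hn Hi Hs. rewrite <- (length_map f l).
  apply NoDup_incl_length.
  - apply NoDup_map_NoDup_ForallPairs; [|exact Hn]. intros a b Ha Hb. now apply Hi.
  - intros y Hy. apply in_map_iff in Hy. destruct Hy as [a [<- Ha]]. now apply Hs.
Qed.

Lemma surj (l : list nat) (f : nat -> nat) (n : nat) :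
  NoDup l -> length l = n ->
  (forall a, In a l -> f a < n) ->
  (forall a b, In a l -> In b l -> f a = f b -> a = b) ->
  forall k, k < n -> exists o, In o l /\ f o = k.
Proof.
  intros Hn Hl Hlt Hi k Hk.
  assert (Hinc : incl (seq 0 n) (map f l)).
  { apply NoDup_length_incl.
    - apply NoDup_map_NoDup_ForallPairs; [|exact Hn]. intros a b Ha Hb. now apply Hi.
    - rewrite length_map, length_seq; lia.
    - intros y Hy. apply in_map_iff in Hy. destruct Hy as [a [<- Ha]].
      apply in_seq. specialize (Hlt a Ha). lia. }
  assert (In k (seq 0 n)) as Hk' by (apply in_seq; lia).
  apply Hinc in Hk'. apply in_map_iff in Hk'. destruct Hk' as [o [Ho1 Ho2]].
  exists o; auto.
Qed.

Theorem mainTheorem3 :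
  forall (h : history) (x i : nat),
    is_history h -> differentiated h ->
    1 <= i <= 3 ->
    (exists u, matching i x u /\ hle h u) ->
    hle_set (hremove h x) (mutex_upto i) ->
    hle_set h (mutex_upto i).
Proof.
  intros h x i Hh _ Hi [u [Hm Hle]] [v [Hv Hlev]].
  destruct (Nat.eq_dec i 1) as [->|Hi1].
  { simpl in Hm; subst. exists []. split; [constructor; lia | exact Hle]. }
  destruct (Nat.eq_dec i 2) as [->|Hi2].
  { simpl in Hm; subst. exists [(Lock, x)]. split; [constructor; lia | exact Hle]. }
  assert (i = 3) by lia. subst i.
  destruct Hm as [u' [-> Hno]].
  destruct Hle as [fu [Hlu [Hfu [Hiu Hbu]]]].
  destruct Hlev as [g [Hlv [Hg [Hig Hbg]]]].
  simpl in Hlv, Hg, Hig, Hbg.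
  destruct Hh as [Hnd _]. unfold event, not_occurs in *.
  set (hs := filter (fun o => negb (Nat.eqb (snd (hlab h o)) x)) (hops h)) in *.
  assert (FA : forall o, In o (hops h) -> Nat.eqb (snd (hlab h o)) x = true -> fu o < 2).
  { intros o Ho E. apply Nat.eqb_eq in E. destruct (Hfu o Ho) as [Hl Hn].
    destruct (fu o) as [|[|k]] eqn:Ef; try lia.
    exfalso. simpl in Hn, Hl. apply (Hno (nth k u' (Lock,0))).
    - apply nth_In. apply Nat.succ_lt_mono, Nat.succ_lt_mono. exact Hl.
    - etransitivity; [apply f_equal; exact Hn | exact E]. }
  assert (FB : forall o, In o (hops h) -> Nat.eqb (snd (hlab h o)) x = false -> 2 <= fu o).
  { intros o Ho E. apply Nat.eqb_neq in E. destruct (Hfu o Ho) as [Hl Hn].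
    destruct (fu o) as [|[|k]] eqn:Ef; try lia; simpl in Hn; rewrite <- Hn in E; simpl in E; lia. }
  assert (Hin : forall o, In o hs <-> In o (hops h) /\ Nat.eqb (snd (hlab h o)) x = false).
  { intro o. unfold hs. rewrite filter_In. destruct (Nat.eqb _ _); simpl; intuition. }
  assert (C1 : length (filter (fun o => Nat.eqb (snd (hlab h o)) x) (hops h)) <= length [0;1]).
  { apply (inj_len _ _ fu).
    - apply NoDup_filter; exact Hnd.
    - intros a b Ha Hb. apply filter_In in Ha, Hb. apply Hiu; tauto.
    - intros a Ha. apply filter_In in Ha. destruct Ha as [Ha E].
      specialize (FA a Ha E). simpl. lia. }
  assert (C2 : length hs <= length (seq 2 (length u'))).
  { apply (inj_len _ _ fu).
    - apply NoDup_filter; exact Hnd.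
    - intros a b Ha Hb. apply Hin in Ha, Hb. apply Hiu; tauto.
    - intros a Ha. apply Hin in Ha. destruct Ha as [Ha E].
      specialize (FB a Ha E). destruct (Hfu a Ha) as [Hl _]. simpl in Hl.
      apply in_seq. lia. }
  pose proof (filter_length (fun o => Nat.eqb (snd (hlab h o)) x) (hops h)) as FL.
  assert (FL2 : length (filter (fun o => Nat.eqb (snd (hlab h o)) x) (hops h)) + length hs = length (hops h)) by exact FL. clear FL. simpl in C1, Hlu. rewrite length_seq in C2.
  assert (Hnv : not_occurs x v).
  { intros e He. destruct (In_nth v e (Lock,0) He) as [k [Hk Hke]].
    destruct (surj hs g (length v) (NoDup_filter _ Hnd) Hlv
               (fun a Ha => proj1 (Hg a Ha)) Hig k Hk) as [o [Ho Hgo]].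
    destruct (Hg o Ho) as [_ Hn]. rewrite Hgo, Hke in Hn. rewrite Hn.
    apply Hin in Ho. apply Nat.eqb_neq. tauto. }
  exists ((Lock, x) :: (Unlock, x) :: v). split.
  { constructor; auto. }
  exists (fun o => if Nat.eqb (snd (hlab h o)) x then fu o else S (S (g o))).
  unfold event in *. split; [simpl; lia|].
  split; [|split].
  - intros o Ho. destruct (Nat.eqb (snd (hlab h o)) x) eqn:E.
    + specialize (FA o Ho E). destruct (Hfu o Ho) as [_ Hn].
      split; [simpl; lia|].
      destruct (fu o) as [|[|k]]; try lia; simpl in *; exact Hn.
    + assert (Ho' : In o hs) by (apply Hin; auto).
      destruct (Hg o Ho') as [Hl Hn]. simpl. split; [lia|exact Hn].
  - intros o1 o2 H1 H2.
    destruct (Nat.eqb (snd (hlab h o1)) x) eqn:E1;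
    destruct (Nat.eqb (snd (hlab h o2)) x) eqn:E2; intro Heq.
    + apply Hiu; auto.
    + specialize (FA o1 H1 E1). lia.
    + specialize (FA o2 H2 E2). lia.
    + apply Hig; try (apply Hin; auto). lia.
  - intros o1 o2 H1 H2 Hb.
    destruct (Nat.eqb (snd (hlab h o1)) x) eqn:E1;
    destruct (Nat.eqb (snd (hlab h o2)) x) eqn:E2.
    + apply Hbu; auto.
    + specialize (FA o1 H1 E1). lia.
    + specialize (FB o1 H1 E1). specialize (FA o2 H2 E2).
      specialize (Hbu o1 o2 H1 H2 Hb). lia.
    + specialize (Hbg o1 o2 ltac:(apply Hin; auto) ltac:(apply Hin; auto) Hb). lia.
Qed.
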